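(* Let $\mathcal{X}\subset\mathbb{R}^d$ be nonempty, closed, convex and compact with diameter $D:=\max_{x,y\in\mathcal{X}}\|x-y\|$. Let $\Phi:\mathcal{X}\to\mathbb{R}$ be differentiable with $L$-Lipschitz gradient, and set $G:=\max_{x\in\mathcal{X}}\|\nabla\Phi(x)\|$, $\Phi_{\max}:=\max_{\mathcal{X}}\Phi$, $\Phi_{\min}:=\min_{\mathcal{X}}\Phi$. Let $F:\mathcal{X}\to\mathbb{R}^d$ satisfy $F(x)=-\nabla\Phi(x)+R(x)$ with $\|R(x)\|\le\varepsilon$ for all $x\in\mathcal{X}$. Run $x_{t+1}=\operatorname{Proj}_{\mathcal{X}}(x_t+\eta\nabla\Phi(x_t))$, $t=0,\dots,T-1$, from $x_0\in\mathcal{X}$ with $0<\eta\le1/L$. Define $\mathcal{G}_\eta(x_t):=\frac1\eta(x_{t+1}-x_t)$, pick $\hat t\in\arg\min_{0\le t\le T-1}\|\mathcal{G}_\eta(x_t)\|$ and set $\hat x_T:=x_{\hat t}$. Then $$\operatorname{Gap}(\hat x_T)\le (D+\eta G)\sqrt{\frac{2(\Phi_{\max}-\Phi_{\min})}{T\eta}}+D\varepsilon.$$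
   Context: For $\bar x\in\mathcal{X}$, the (Stampacchia) duality gap of the operator $F$ is $\operatorname{Gap}(\bar x):=\max_{x\in\mathcal{X}}\langle F(\bar x),\bar x-x\rangle$ with the Euclidean inner product. $\operatorname{Proj}_{\mathcal{X}}$ is Euclidean projection onto $\mathcal{X}$. *)

(* Defs.v *)
From HB Require Import structures.
From mathcomp Require Import all_boot all_order all_algebra.
From mathcomp Require Import all_classical all_reals all_analysis.
Set Implicit Arguments. Unset Strict Implicit. Unset Printing Implicit Defensive.
Import Order.TTheory GRing.Theory Num.Theory.
Import numFieldNormedType.Exports.
Local Open Scope classical_set_scope.
Local Open Scope ring_scope.

Section Defs.
Variables (R : realType) (d : nat).
Local Notation V := 'rV[R]_d.

(* Euclidean inner product and Euclidean norm on R^d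
   (the library norm on 'rV is the max-norm, so we use our own). *)
Definition dotp (u v : V) : R := \sum_(i < d) u ord0 i * v ord0 i.
Definition enorm (u : V) : R := Num.sqrt (dotp u u).

Definition is_convex_set (X : set V) : Prop :=
  forall x y (l : R), X x -> X y -> 0 <= l <= 1 -> X (l *: x + (1 - l) *: y).

Definition is_proj (X : set V) (y p : V) : Prop :=
  X p /\ forall z, X z -> enorm (y - p) <= enorm (y - z).

Definition is_gradient_on (X : set V) (Phi : V -> R) (g : V -> V) : Prop :=
  forall x, X x -> differentiable Phi x /\ forall v, 'd Phi x v = dotp (g x) v.

Definition Gap (X : set V) (F : V -> V) (xb : V) : R :=
  sup [set dotp (F xb) (xb - x) | x in X].

Definition diam (X : set V) : R :=
  sup [set enorm (x - y) | x in X & y in X].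
End Defs.

(* Main.v *)
Require Import Defs.
From HB Require Import structures.
From mathcomp Require Import all_boot all_order all_algebra.
From mathcomp Require Import all_classical all_reals all_analysis.
From mathcomp Require Import ring lra.
Import Order.TTheory GRing.Theory Num.Theory.
Import numFieldNormedType.Exports.
Local Open Scope classical_set_scope.
Local Open Scope ring_scope.

Section Aux.
Variables (R : realType) (d : nat).
Local Notation V := 'rV[R]_d.
Implicit Types u v w : V.

Lemma dotpC u v : dotp u v = dotp v u.
Proof. by apply: eq_bigr => i _; rewrite mulrC. Qed.
Lemma dotpDl u v w : dotp (u + v) w = dotp u w + dotp v w.
Proof. by rewrite /dotp -big_split; apply: eq_bigr => i _; rewrite mxE mulrDl. Qed.
Lemma dotpZl a u v : dotp (a *: u) v = a * dotp u v.
Proof. by rewrite /dotp mulr_sumr; apply: eq_bigr => i _; rewrite mxE mulrA. Qed.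
Lemma dotpNl u v : dotp (- u) v = - dotp u v.
Proof. by rewrite /dotp -sumrN; apply: eq_bigr => i _; rewrite mxE mulNr. Qed.
Lemma dotpBl u v w : dotp (u - v) w = dotp u w - dotp v w.
Proof. by rewrite dotpDl dotpNl. Qed.
Lemma dotpDr u v w : dotp w (u + v) = dotp w u + dotp w v.
Proof. by rewrite dotpC dotpDl !(dotpC w). Qed.
Lemma dotpZr a u v : dotp v (a *: u) = a * dotp v u.
Proof. by rewrite dotpC dotpZl dotpC. Qed.
Lemma dotpNr u v : dotp v (- u) = - dotp v u.
Proof. by rewrite dotpC dotpNl dotpC. Qed.
Lemma dotpBr u v w : dotp w (u - v) = dotp w u - dotp w v.
Proof. by rewrite dotpDr dotpNr. Qed.
Lemma dotpp_ge0 u : 0 <= dotp u u.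
Proof. by apply: sumr_ge0 => i _; rewrite -expr2 sqr_ge0. Qed.
Lemma dotpp_eq0 u : dotp u u = 0 -> u = 0.
Proof.
move=> H0; apply/matrixP => i j; rewrite mxE (ord1 i).
have H : forall k : 'I_d, true -> u ord0 k * u ord0 k = 0.
  by apply: psumr_eq0P H0 => k _; rewrite -expr2 sqr_ge0.
by have /eqP := H j isT; rewrite mulf_eq0 orbb => /eqP ->.
Qed.
Lemma enorm_ge0 u : 0 <= enorm u.
Proof. exact: sqrtr_ge0. Qed.
Lemma enorm_sq u : enorm u ^+ 2 = dotp u u.
Proof. by rewrite /enorm sqr_sqrtr // dotpp_ge0. Qed.
Lemma enormN u : enorm (- u) = enorm u.
Proof. by rewrite /enorm dotpNl dotpNr opprK. Qed.
Lemma enormZ a u : enorm (a *: u) = `|a| * enorm u.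
Proof.
by rewrite /enorm dotpZl dotpZr mulrA -expr2 sqrtrM ?sqr_ge0 // sqrtr_sqr.
Qed.
Lemma enorm_le u M : 0 <= M -> dotp u u <= M ^+ 2 -> enorm u <= M.
Proof. by move=> M0 H; rewrite /enorm -(ger0_norm M0) -sqrtr_sqr ler_wsqrtr. Qed.
Lemma enorm_sq_le {u v} : enorm u <= enorm v -> dotp u u <= dotp v v.
Proof. by rewrite /enorm ler_sqrt // dotpp_ge0. Qed.

Lemma CS u v : dotp u v <= enorm u * enorm v.
Proof.
have [a0|] := eqVneq (enorm u) 0.
  have : dotp u u = 0 by (rewrite -enorm_sq; rewrite a0 expr0n).
  by move/dotpp_eq0 ->; rewrite /dotp big1 ?mulr_ge0 ?enorm_ge0 // => i _; rewrite mxE mul0r.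
have [b0|] := eqVneq (enorm v) 0.
  have : dotp v v = 0 by (rewrite -enorm_sq; rewrite b0 expr0n).
  by move/dotpp_eq0 ->; rewrite /dotp big1 ?mulr_ge0 ?enorm_ge0 // => i _; rewrite mxE mulr0.
move=> bn an.
have ha : 0 < enorm u by rewrite lt_def an enorm_ge0.
have hb : 0 < enorm v by rewrite lt_def bn enorm_ge0.
have := dotpp_ge0 (enorm v *: u - enorm u *: v).
rewrite !(dotpBl, dotpBr, dotpZl, dotpZr) -!enorm_sq (dotpC v u).
move=> H.
have : 2 * (enorm u * enorm v) * dotp u v <= 2 * (enorm u * enorm v) * (enorm u * enorm v) by nra.
by rewrite ler_pM2l // mulr_gt0 // mulr_gt0.
Qed.

Lemma CSn u v : - (enorm u * enorm v) <= dotp u v.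
Proof. by rewrite lerNl -dotpNl -(enormN u) CS. Qed.

Lemma enormD u v : enorm (u + v) <= enorm u + enorm v.
Proof.
apply: enorm_le; first by rewrite addr_ge0 // enorm_ge0.
rewrite dotpDl !dotpDr (dotpC v u) -!enorm_sq.
have := CS u v; nra.
Qed.


Lemma dotp_expand (A B : V) l : dotp (A - l *: B) (A - l *: B) =
  dotp A A - 2 * l * dotp A B + l ^+ 2 * dotp B B.
Proof. rewrite !(dotpBl, dotpBr, dotpZl, dotpZr) (dotpC B A); ring. Qed.

Lemma proj_vi (X : set V) y p z : is_convex_set X -> is_proj X y p -> X z ->
  dotp (y - p) (z - p) <= 0.
Proof.
move=> cX [Xp Hp] Xz.
set a := dotp (y-p) (z-p); set c := dotp (z-p) (z-p).
have c0 : 0 <= c by exact: dotpp_ge0.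
have key : forall l, 0 < l -> l <= 1 -> 2 * a <= l * c.
  move=> l l0 l1.
  have Xw := cX z p l Xz Xp (andb_true_intro (conj (ltW l0) l1)).
  have := enorm_sq_le (Hp _ Xw).
  have -> : y - (l *: z + (1 - l) *: p) = (y - p) - l *: (z - p).
    by apply/matrixP => i j; rewrite !mxE; ring.
  rewrite dotp_expand -/a -/c => H.
  nra.
rewrite leNgt; apply/negP => a0.
have ac0 : 0 < a + c by lra.
have := key (a / (a + c)) (divr_gt0 a0 ac0).
rewrite ler_pdivrMr // mul1r => /(_ ltac:(lra)).
rewrite mulrAC ler_pdivlMr //.
nra.
Qed.

Lemma compact_enorm_bound (X : set V) : compact X ->
  exists M, 0 <= M /\ forall x, X x -> enorm x <= M.
Proof.
move=> /compact_bounded [M [Mr HM]].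
have HN := HM (`|M| + 1) ltac:(by rewrite (le_lt_trans (real_ler_norm Mr)) // ltrDl).
set N := `|M| + 1 in HN.
have N0 : 0 <= N by rewrite addr_ge0.
exists ((d.+1)%:R * N); split; first by rewrite mulr_ge0.
move=> x Xx; have Hx : `|x| <= N := HN x Xx.
apply: enorm_le; first by rewrite mulr_ge0.
have ent : forall i, x ord0 i * x ord0 i <= N * N.
  move=> i.
  have : `|x ord0 i| <= N.
    apply: le_trans Hx.
    rewrite [X in _ <= X]/Num.norm /= mx_normrE.
    exact: (le_bigmax _ (fun ij : 'I_1 * 'I_d => `|x ij.1 ij.2|) (ord0, i)).
  rewrite ler_norml => /andP[h1 h2]; nra.
apply: (le_trans (ler_sum _ (fun i _ => ent i))).
rewrite sumr_const card_ord -mulr_natr.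
have dd : 0 <= d%:R :> R by [].
have NN : 0 <= N * N by rewrite mulr_ge0.
rewrite exprMn -natr1.
nra.
Qed.

Lemma compact_fun_bound (X : set V) (f : V -> R) : compact X ->
  (forall x, X x -> differentiable f x) ->
  exists M, forall x, X x -> `|f x| <= M.
Proof.
move=> cX df.
have cf : {within X, continuous f}.
  apply: continuous_in_subspaceT => x; rewrite inE => Xx.
  exact: differentiable_continuous (df x Xx).
have := compact_bounded (continuous_compact cf cX).
move=> [M [Mr HM]].
exists (`|M| + 1) => x Xx.
apply: (HM (`|M| + 1)).
  by rewrite (le_lt_trans (real_ler_norm Mr)) // ltrDl.
by exists x.
Qed.


Lemma phi_derive (Phi : V -> R) (g : V -> V) x v s :
  differentiable Phi (s *: v + x) ->
  (forall w, 'd Phi (s *: v + x) w = dotp (g (s *: v + x)) w) ->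
  is_derive s 1 (fun t : R => Phi (t *: v + x)) (dotp (g (s *: v + x)) v).
Proof.
move=> dz hz; set z := s *: v + x.
have E : (fun h : R => h^-1 *: (((fun t : R => Phi (t *: v + x)) \o shift s) (h *: 1) - Phi (s *: v + x)))
   = (fun h => h^-1 *: ((Phi \o shift z) (h *: v) - Phi z)).
  apply/funext => h /=; rewrite /shift /z; congr (_ *: (_ - _)); congr Phi.
  by rewrite /GRing.scale /= mulr1 -/(GRing.scale _ _) scalerDl addrA.
apply: DeriveDef.
  rewrite /derivable E; exact: diff_derivable dz.
by rewrite /derive E -/(derive Phi z v) deriveE // hz.
Qed.


Lemma dpoly (k c s : R) :
  is_derive s 1 (fun t : R => k * (t * t) - c * t) (k * (s + s) - c).
Proof.
have h1 : is_derive s 1 (fun t : R => t) 1 by exact: is_derive_id.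
have h2 : is_derive s 1 (fun t : R => t * t) (s + s).
  have H := is_deriveM h1 h1.
  have -> : s + s = s *: 1 + s *: 1 by rewrite /GRing.scale /= mulr1.
  exact: H.
have h3 : is_derive s 1 (fun t : R => k * (t * t)) (k * (s + s)).
  exact: (is_deriveZ k h2).
have h4 : is_derive s 1 (fun t : R => c * t) c.
  have H := is_deriveZ c h1.
  rewrite -[X in is_derive _ _ _ X](mulr1 c).
  exact: H.
exact: (is_deriveB h3 h4).
Qed.

Lemma ascent (X : set V) Phi g L x y : is_convex_set X -> is_gradient_on X Phi g ->
  (forall y z, X y -> X z -> enorm (g y - g z) <= L * enorm (y - z)) -> 0 <= L ->
  X x -> X y ->
  Phi x + dotp (g x) (y - x) - L / 2 * dotp (y - x) (y - x) <= Phi y.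
Proof.
move=> cX gX Lip L0 Xx Xy.
set v := y - x; set c := dotp (g x) v; set q := dotp v v.
have Xs : forall s : R, 0 <= s <= 1 -> X (s *: v + x).
  move=> s hs; have := cX y x s Xy Xx hs.
  have -> // : s *: y + (1 - s) *: x = s *: v + x.
  by rewrite /v; apply/matrixP => i j; rewrite !mxE; ring.
set h := (fun t : R => Phi (t *: v + x)) + (fun t : R => (L/2 * q) * (t * t) - c * t).
have hd : forall s : R, 0 <= s <= 1 ->
    is_derive s 1 h (dotp (g (s *: v + x)) v + ((L/2*q) * (s + s) - c)).
  move=> s hs; have [df dd] := gX _ (Xs s hs).
  have H := is_deriveD (phi_derive _ _ _ _ _ df dd) (dpoly (L/2*q) c s).
  exact: H.
have cont : {within `[0, 1], continuous h}.
  apply: (derivable_within_continuous (f:=h)) => s; rewrite in_itv /= => hs.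
  by have [] := hd s hs.
have [s0 s0in Hm] := MVT ltr01 (fun s sin => hd s (ltac:(move: sin; rewrite in_itv /= => /andP[a b]; by rewrite !ltW))) cont.
move: s0in; rewrite in_itv /= => /andP[s0p s01].
have Xz := Xs s0 ltac:(by rewrite !ltW).
have q0 : 0 <= q by exact: dotpp_ge0.
have key : - (L * s0 * q) <= dotp (g (s0 *: v + x)) v - c.
  rewrite /c -dotpBl.
  apply: le_trans (CSn _ _).
  have H1 := Lip _ _ Xz Xx.
  rewrite addrK enormZ ger0_norm in H1; last exact: ltW.
  have -> : q = enorm v * enorm v by rewrite /q -enorm_sq expr2.
  rewrite lerN2 mulrA.
  apply: ler_wpM2r; first exact: enorm_ge0.
  by rewrite -mulrA.
have Hm' : Phi (1 *: v + x) + (L / 2 * q * (1 * 1) - c * 1) - (Phi (0 *: v + x) + (L / 2 * q * (0 * 0) - c * 0))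
   = (dotp (g (s0 *: v + x)) v + (L / 2 * q * (s0 + s0) - c)) * (1 - 0) := Hm.
rewrite scale0r add0r scale1r /v subrK in Hm'.
have : 0 <= Phi y + (L / 2 * q * (1 * 1) - c * 1) - (Phi x + (L / 2 * q * (0 * 0) - c * 0)).
  rewrite Hm' subr0 mulr1.
  have : 0 <= L * s0 * q by rewrite mulr_ge0 // mulr_ge0 // ltW.
  lra.
rewrite -/v -/q -/c; lra.
Qed.

End Aux.
Arguments dotpC {R d}.
Arguments dotpDl {R d}.
Arguments dotpZl {R d}.
Arguments dotpNl {R d}.
Arguments dotpBl {R d}.
Arguments dotpDr {R d}.
Arguments dotpZr {R d}.
Arguments dotpNr {R d}.
Arguments dotpBr {R d}.
Arguments dotpp_ge0 {R d}.
Arguments dotpp_eq0 {R d}.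
Arguments enorm_ge0 {R d}.
Arguments enorm_sq {R d}.
Arguments enormN {R d}.
Arguments enormZ {R d}.
Arguments enorm_le {R d}.
Arguments enorm_sq_le {R d}.
Arguments CS {R d}.
Arguments CSn {R d}.
Arguments enormD {R d}.
Arguments dotp_expand {R d}.
Arguments proj_vi {R d X y p z}.
Arguments compact_enorm_bound {R d X}.
Arguments compact_fun_bound {R d X f}.
Arguments phi_derive {R d}.
Arguments dpoly {R}.
Arguments ascent {R d X Phi g L x y}.
Theorem theorem6p7 (R : realType) (d : nat) (X : set 'rV[R]_d)
  (Phi : 'rV[R]_d -> R) (gradPhi : 'rV[R]_d -> 'rV[R]_d)
  (F Rr : 'rV[R]_d -> 'rV[R]_d) (L eps eta : R) (T : nat)
  (x : nat -> 'rV[R]_d) (that : nat) :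
  X !=set0 -> closed X -> is_convex_set X -> compact X ->
  is_gradient_on X Phi gradPhi ->
  0 < L ->
  (forall y z, X y -> X z -> enorm (gradPhi y - gradPhi z) <= L * enorm (y - z)) ->
  (forall y, X y -> F y = - gradPhi y + Rr y) ->
  (forall y, X y -> enorm (Rr y) <= eps) ->
  0 < eta -> eta <= L^-1 ->
  (0 < T)%N ->
  X (x 0%N) ->
  (forall t, (t < T)%N -> is_proj X (x t + eta *: gradPhi (x t)) (x t.+1)) ->
  (that < T)%N ->
  (forall t, (t < T)%N ->
     enorm (eta^-1 *: (x that.+1 - x that)) <= enorm (eta^-1 *: (x t.+1 - x t))) ->
  let D := diam X in
  let G := sup [set enorm (gradPhi y) | y in X] in
  let Phimax := sup [set Phi y | y in X] in
  let Phimin := inf [set Phi y | y in X] in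
  Gap X F (x that) <=
    (D + eta * G) * Num.sqrt (2 * (Phimax - Phimin) / (T%:R * eta)) + D * eps.
Proof.
move=> [y0 Xy0] clX cX kX gX L0 Lip FE Rb eta0 etaL T0 X0 Hproj tT Hmin.
cbv zeta.
set D := diam X.
set G := sup [set enorm (gradPhi y) | y in X].
set Phimax := sup [set Phi y | y in X].
set Phimin := inf [set Phi y | y in X].
set g := gradPhi.
have Xt : forall t, (t <= T)%N -> X (x t).
  elim => [|t IH] ht; first exact: X0.
  by case: (Hproj t ht).
have hdiff : forall y, X y -> differentiable Phi y by move=> y /gX [].
have [M [M0 HM]] := compact_enorm_bound kX.
have [P HP] := compact_fun_bound kX hdiff.
have hasD : has_ubound [set enorm (a - b) | a in X & b in X].
  exists (M + M) => r [a Xa [b Xb <-]].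
  apply: le_trans (enormD _ _) _; rewrite enormN.
  by apply: lerD; apply: HM.
have Dle : forall a b, X a -> X b -> enorm (a - b) <= D.
  move=> a b Xa Xb; apply: ub_le_sup hasD _ _.
  by exists a => //; exists b.
have D0 : 0 <= D by apply: le_trans (Dle _ _ Xy0 Xy0); exact: enorm_ge0.
have hasG : has_ubound [set enorm (g y) | y in X].
  exists (L * (M + M) + enorm (g y0)) => r [y Xy <-].
  have -> : g y = (g y - g y0) + g y0 by rewrite subrK.
  apply: le_trans (enormD _ _) _; apply: lerD => //.
  apply: le_trans (Lip _ _ Xy Xy0) _.
  apply: ler_wpM2l; first exact: ltW.
  apply: le_trans (enormD _ _) _; rewrite enormN.
  by apply: lerD; apply: HM.
have Gle : forall y, X y -> enorm (g y) <= G.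
  by move=> y Xy; apply: ub_le_sup hasG _ _; exists y.
have G0 : 0 <= G by apply: le_trans (Gle _ Xy0); exact: enorm_ge0.
have hasP : has_ubound [set Phi y | y in X].
  exists P => r [y Xy <-]; apply: le_trans (HP y Xy); exact: ler_norm.
have hasPl : has_lbound [set Phi y | y in X].
  exists (- P) => r [y Xy <-]; rewrite lerNl; apply: le_trans (HP y Xy).
  by rewrite -normrN ler_norm.
have Pmax : forall y, X y -> Phi y <= Phimax.
  by move=> y Xy; apply: ub_le_sup hasP _ _; exists y.
have Pmin : forall y, X y -> Phimin <= Phi y.
  by move=> y Xy; apply: ge_inf hasPl _ _; exists y.
have etaL1 : eta * L <= 1.
  by rewrite -(mulVf (lt0r_neq0 L0)) ler_pM2r.
set m := dotp (x that.+1 - x that) (x that.+1 - x that).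
have m0 : 0 <= m by exact: dotpp_ge0.
have step : forall t, (t < T)%N -> m / 2 <= eta * (Phi (x t.+1) - Phi (x t)).
  move=> t htT.
  have Xc := Xt t (ltnW htT); have Xn := Xt t.+1 htT.
  set Dl := x t.+1 - x t.
  have vi : dotp Dl Dl <= eta * dotp (g (x t)) Dl.
    have := proj_vi cX (Hproj t htT) Xc.
    have -> : x t + eta *: gradPhi (x t) - x t.+1 = eta *: g (x t) - Dl.
      by rewrite /Dl /g; apply/matrixP => i j; rewrite !mxE; ring.
    have -> : x t - x t.+1 = - Dl.
      by rewrite /Dl; apply/matrixP => i j; rewrite !mxE; ring.
    rewrite dotpNr dotpBl dotpZl; lra.
  have asc := ascent cX gX Lip (ltW L0) Xc Xn.
  rewrite -/Dl in asc.
  have mle : m <= dotp Dl Dl.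
    apply: enorm_sq_le.
    have := Hmin t htT; rewrite !enormZ.
    by rewrite ler_pM2l // normr_gt0 invr_eq0 lt0r_neq0.
  have q0 : 0 <= dotp Dl Dl by exact: dotpp_ge0.
  have e1 : eta * (Phi (x t) + dotp (g (x t)) Dl - L / 2 * dotp Dl Dl) <= eta * Phi (x t.+1).
    by rewrite ler_pM2l.
  have e2 : eta * L * dotp Dl Dl <= dotp Dl Dl.
    by rewrite -[X in _ <= X]mul1r ler_wpM2r.
  nra.
have sum : forall n, (n <= T)%N -> n%:R * (m / 2) <= eta * (Phi (x n) - Phi (x 0%N)).
  elim => [|n IH] hn; first by rewrite mul0r subrr mulr0.
  have := step n hn; have := IH (ltnW hn).
  rewrite -natr1; lra.
set W := Phimax - Phimin.
have hW : T%:R * (m / 2) <= eta * W.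
  apply: le_trans (sum T (leqnn T)) _.
  rewrite ler_pM2l //; exact: lerB (Pmax _ (Xt T (leqnn T))) (Pmin _ X0).
have W0 : 0 <= W.
  by rewrite subr_ge0; apply: le_trans (Pmin _ Xy0) (Pmax _ Xy0).
have Tpos : 0 < T%:R :> R by rewrite ltr0n.
set S := Num.sqrt (2 * W / (T%:R * eta)).
have S0 : 0 <= S by exact: sqrtr_ge0.
have hD : enorm (x that.+1 - x that) <= eta * S.
  apply: enorm_le; first by rewrite mulr_ge0 // ltW.
  rewrite exprMn sqr_sqrtr; last by rewrite divr_ge0 // ?mulr_ge0 // ltW.
  have -> : eta ^+ 2 * (2 * W / (T%:R * eta)) = 2 * eta * W / T%:R.
    by field; rewrite lt0r_neq0 // lt0r_neq0.
  rewrite ler_pdivlMr // -/m.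
  lra.
rewrite /Gap; apply: ge_sup.
  by exists (dotp (F (x that)) (x that - y0)); exists y0.
move=> r [z Xz <-].
set xh := x that; set p := x that.+1; set Dl := p - xh.
have Xh := Xt that (ltnW tT); have Xp : X p := Xt that.+1 tT.
rewrite FE // dotpDl dotpNl -dotpNr opprB.
have vi : eta * dotp (g xh) (z - p) <= dotp Dl (z - p).
  have := proj_vi cX (Hproj that tT) Xz.
  have -> : x that + eta *: gradPhi (x that) - x that.+1 = eta *: g xh - Dl.
    by rewrite /Dl /g /xh /p; apply/matrixP => i j; rewrite !mxE; ring.
  rewrite dotpBl dotpZl; lra.
have split : z - xh = (z - p) + Dl by rewrite /Dl addrA subrK.
rewrite split dotpDr.
have i1 : dotp Dl (z - p) <= enorm Dl * D.
  apply: le_trans (CS _ _) _; apply: ler_wpM2l; first exact: enorm_ge0.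
  exact: Dle.
have i2 : dotp (g xh) Dl <= G * enorm Dl.
  apply: le_trans (CS _ _) _; apply: ler_wpM2r; first exact: enorm_ge0.
  exact: Gle.
have i3 : dotp (Rr xh) (xh - z) <= eps * D.
  apply: le_trans (CS _ _) _.
  apply: le_trans (ler_wpM2l (enorm_ge0 _) (Dle _ _ Xh Xz)) _.
  by apply: ler_wpM2r => //; apply: Rb.
have i5 : enorm Dl * D <= eta * S * D by apply: ler_wpM2r.
have i6 : G * enorm Dl <= G * (eta * S) by apply: ler_wpM2l.
rewrite -/S -/W.
have : eta * (dotp (g xh) (z - p) + dotp (g xh) Dl + dotp (Rr xh) (xh - z))
   <= eta * ((D + eta * G) * S + D * eps).
  have e2 : eta * dotp (g xh) Dl <= eta * (G * enorm Dl) by rewrite ler_pM2l.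
  have e3 : eta * dotp (Rr xh) (xh - z) <= eta * (eps * D) by rewrite ler_pM2l.
  nra.
by rewrite ler_pM2l.
Qed.
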